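(* Assume $\rho_{i,j}\ge 0$ for all cells, and consider the forward Euler finite-volume update of the intensity \[ \rho^{+}_{i,j} =\rho_{i,j} -\Delta z\left( \frac{F^x_{i+\frac12,j}-F^x_{i-\frac12,j}}{\Delta x} +\frac{F^y_{i,j+\frac12}-F^y_{i,j-\frac12}}{\Delta y} \right), \] with boundary face fluxes set to zero, $F^x_{\frac12,j}=F^x_{N_x+\frac12,j}=0$, $F^y_{i,\frac12}=F^y_{i,N_y+\frac12}=0$, where the interior fluxes are Rusanov (local Lax--Friedrichs) fluxes \[ F^x_{i+\frac12,j} = \tfrac12\big(\rho_{i,j}+\rho_{i+1,j}\big)\left(v^x_{i+\frac12,j} + \omega^x_{i+\frac12,j} \right) -\tfrac12 \left( a^x_{i+\frac12,j} + b^x_{i+\frac12,j} \right)\big(\rho_{i+1,j}-\rho_{i,j}\big), \] (and $F^y_{i,j+\frac12}$ defined analogously in the $y$-direction) with wave-speed parameters chosen as $ a^x_{i+\frac12,j} := |v^x_{i+\frac12,j}|,\ a^y_{i,j+\frac12} := |v^y_{i,j+\frac12}|, $ and polarization gradient parameters $ b^x_{i+\frac12,j} := |\omega^x_{i+\frac12,j}|,\ b^y_{i,j+\frac12} := |\omega^y_{i,j+\frac12}|. $ If the $z$-step satisfies the global CFL condition \[ \Delta z\left( \frac{\max_{i,j} c^x_{i+\frac12,j}}{\Delta x} + \frac{\max_{i,j} c^y_{i,j+\frac12}}{\Delta y} \right)\le \frac{1}{2}, \] where $c^x_{i+\frac12,j} = a^x_{i+\frac12,j}+b^x_{i+\frac12,j}$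 and $c^y_{i,j+\frac12} = a^y_{i,j+\frac12}+b^y_{i,j+\frac12}$, then the forward Euler update yields $\rho^{+}_{i,j}\ge 0$ for all cells. Consequently, the third-order SSP Runge--Kutta scheme (SSP-RK3) preserves nonnegativity under the same CFL condition.
   Context: Discretization of the intensity equation $\partial_z \rho + \frac{1}{k_0}\nabla\cdot(\rho(\nabla\phi+\nabla\gamma))=0$ on a uniform Cartesian grid of $\Omega=(-L,L)^2$ with cell centers $x_i=-L+(i-\tfrac12)\Delta x$, $y_j=-L+(j-\tfrac12)\Delta y$, $i=1,\dots,N_x$, $j=1,\dots,N_y$, $\Delta x=2L/N_x$, $\Delta y=2L/N_y$; $k_0>0$ is the wavenumber. Cell-centered velocities and polarization gradients are $v^x_{i,j}=\frac1{k_0}(D_x^0\phi)_{i,j}$, $\omega^x_{i,j}=\frac1{k_0}(D_x^0\gamma)_{i,j}$ (centered differences with Neumann ghost-cell reflection), and face values are arithmetic averages $v^x_{i+\frac12,j}=\tfrac12(v^x_{i,j}+v^x_{i+1,j})$, $\omega^x_{i+\frac12,j}=\tfrac12(\omega^x_{i,j}+\omega^x_{i+1,j})$, analogously in $y$. SSP-RK3 for $U'=\mathcal R(U)$ is $U^{(1)}=U^n+\Delta z\mathcal R(U^n)$, $U^{(2)}=\tfrac34U^n+\tfrac14(U^{(1)}+\Delta z\mathcal R(U^{(1)}))$, $U^{n+1}=\tfrac13U^n+\tfrac23(U^{(2)}+\Delta z\mathcal R(U^{(2)}))$, i.e. a convex combination of forward Euler steps. *)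

(* Defs.v *)
(* R : realFieldType.  Cells are 0-based: paper cell (i,j),
   1<=i<=Nx, is index (i-1,j-1) here, with 0 <= i < Nx, 0 <= j < Ny. *)
From mathcomp Require Import all_boot all_order all_algebra.
Set Implicit Arguments. Unset Strict Implicit. Unset Printing Implicit Defensive.
Import Order.TTheory GRing.Theory Num.Theory.
Local Open Scope ring_scope.

Section Scheme.
Variables (R : realFieldType) (L k0 : R) (Nx Ny : nat).

Definition grid := nat -> nat -> R.

Definition dx : R := 2 * L / Nx%:R.
Definition dy : R := 2 * L / Ny%:R.

(* Neumann ghost-cell reflection: ghost value = adjacent interior value. *)
Definition xm (u : grid) i j : R := if i == 0%N then u 0%N j else u i.-1 j.
Definition xp (u : grid) i j : R := if (i.+1 < Nx)%N then u i.+1 j else u i j.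
Definition ym (u : grid) i j : R := if j == 0%N then u i 0%N else u i j.-1.
Definition yp (u : grid) i j : R := if (j.+1 < Ny)%N then u i j.+1 else u i j.

Definition Dx0 (u : grid) : grid := fun i j => (xp u i j - xm u i j) / (2 * dx).
Definition Dy0 (u : grid) : grid := fun i j => (yp u i j - ym u i j) / (2 * dy).

Definition cvx (phi : grid) : grid := fun i j => k0^-1 * Dx0 phi i j.
Definition cvy (phi : grid) : grid := fun i j => k0^-1 * Dy0 phi i j.

(* face values: fx u i j is the value at face (i+1/2, j) in 0-based indexing,
   i.e. between cells i and i+1 *)
Definition facex (u : grid) : grid := fun i j => (u i j + u i.+1 j) / 2.
Definition facey (u : grid) : grid := fun i j => (u i j + u i j.+1) / 2.

Definition vxf phi := facex (cvx phi).
Definition vyf phi := facey (cvy phi).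
Definition wxf gam := facex (cvx gam).
Definition wyf gam := facey (cvy gam).

Definition ax phi : grid := fun i j => `|vxf phi i j|.
Definition ay phi : grid := fun i j => `|vyf phi i j|.
Definition bx gam : grid := fun i j => `|wxf gam i j|.
Definition by_ gam : grid := fun i j => `|wyf gam i j|.
Definition cx phi gam : grid := fun i j => ax phi i j + bx gam i j.
Definition cy phi gam : grid := fun i j => ay phi i j + by_ gam i j.

Definition Fx (phi gam rho : grid) : grid := fun i j =>
  if (i.+1 < Nx)%N then
    (rho i j + rho i.+1 j) / 2 * (vxf phi i j + wxf gam i j)
    - (ax phi i j + bx gam i j) / 2 * (rho i.+1 j - rho i j)
  else 0.
Definition Fy (phi gam rho : grid) : grid := fun i j =>
  if (j.+1 < Ny)%N then
    (rho i j + rho i j.+1) / 2 * (vyf phi i j + wyf gam i j)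
    - (ay phi i j + by_ gam i j) / 2 * (rho i j.+1 - rho i j)
  else 0.

Definition FxL phi gam rho : grid := fun i j =>
  if i == 0%N then 0 else Fx phi gam rho i.-1 j.
Definition FyL phi gam rho : grid := fun i j =>
  if j == 0%N then 0 else Fy phi gam rho i j.-1.

Definition Rop phi gam (rho : grid) : grid := fun i j =>
  - ((Fx phi gam rho i j - FxL phi gam rho i j) / dx
     + (Fy phi gam rho i j - FyL phi gam rho i j) / dy).

Definition euler phi gam (dz : R) (rho : grid) : grid := fun i j =>
  rho i j + dz * Rop phi gam rho i j.

Definition ssprk3 phi gam (dz : R) (rho : grid) : grid :=
  let u1 := euler phi gam dz rho in
  let u2 := fun i j => 3/4 * rho i j + 1/4 * euler phi gam dz u1 i j in
  fun i j => 1/3 * rho i j + 2/3 * euler phi gam dz u2 i j.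

(* maxima of c over interior faces: i < Nx-1 (resp. j < Ny-1) *)
Definition cxmax phi gam : R :=
  \big[Num.max/0]_(i < Nx.-1) \big[Num.max/0]_(j < Ny) cx phi gam i j.
Definition cymax phi gam : R :=
  \big[Num.max/0]_(i < Nx) \big[Num.max/0]_(j < Ny.-1) cy phi gam i j.

Definition nonneg (rho : grid) : Prop :=
  forall i j, (i < Nx)%N -> (j < Ny)%N -> 0 <= rho i j.

End Scheme.

(* Main.v *)
Require Import Defs.
From mathcomp Require Import all_boot all_order all_algebra.
From mathcomp Require Import ring lra.
Import Order.TTheory GRing.Theory Num.Theory.
Local Open Scope ring_scope.

Section P.
Variables (R : realFieldType) (L k0 : R) (Nx Ny : nat) (phi gam : grid R).

Lemma cx_le i j : (i < Nx.-1)%N -> (j < Ny)%N ->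
  cx L k0 Nx phi gam i j <= cxmax L k0 Nx Ny phi gam.
Proof.
move=> hi hj; rewrite /cxmax.
apply: le_trans (le_bigmax _ _ (Ordinal hi)) => /=.
exact: (le_bigmax _ (fun j : 'I_Ny => cx L k0 Nx phi gam i j) (Ordinal hj)).
Qed.

Lemma cy_le i j : (i < Nx)%N -> (j < Ny.-1)%N ->
  cy L k0 Ny phi gam i j <= cymax L k0 Nx Ny phi gam.
Proof.
move=> hi hj; rewrite /cymax.
apply: le_trans (le_bigmax _ _ (Ordinal hi)) => /=.
exact: (le_bigmax _ (fun j : 'I_Ny.-1 => cy L k0 Ny phi gam i j) (Ordinal hj)).
Qed.

Lemma cxmax_ge0 : 0 <= cxmax L k0 Nx Ny phi gam.
Proof.
rewrite /cxmax; elim/big_ind: _ => //= [x y hx hy|i _].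
  by rewrite le_max hx.
by elim/big_ind: _ => //= [x y hx hy|k _]; [rewrite le_max hx | by rewrite /cx /ax /bx addr_ge0].
Qed.

Lemma cymax_ge0 : 0 <= cymax L k0 Nx Ny phi gam.
Proof.
rewrite /cymax; elim/big_ind: _ => //= [x y hx hy|i _].
  by rewrite le_max hx.
by elim/big_ind: _ => //= [x y hx hy|k _]; [rewrite le_max hx | by rewrite /cy /ay /by_ addr_ge0].
Qed.

Lemma key (r0 r1 u c cm : R) : 0 <= r0 -> 0 <= r1 -> `|u| <= c -> c <= cm ->
  (r0 + r1) / 2 * u - c / 2 * (r1 - r0) <= r0 * cm /\
  - ((r0 + r1) / 2 * u - c / 2 * (r1 - r0)) <= r1 * cm.
Proof.
move=> h0 h1 /ler_normlP [hu1 hu2] hc.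
have a1 : 0 <= r1 * (c - u) by apply: mulr_ge0; lra.
have a2 : 0 <= r0 * (c - u) by apply: mulr_ge0; lra.
have a3 : 0 <= r0 * (c + u) by apply: mulr_ge0; lra.
have a4 : 0 <= r1 * (c + u) by apply: mulr_ge0; lra.
have a5 : 0 <= r0 * (cm - c) by apply: mulr_ge0; lra.
have a6 : 0 <= r1 * (cm - c) by apply: mulr_ge0; lra.
split; nra.
Qed.

Lemma normvw (v w : R) : `|v + w| <= `|v| + `|w|.
Proof. exact: ler_normD. Qed.

Lemma Fx_le rho i j : nonneg Nx Ny rho -> (i < Nx)%N -> (j < Ny)%N ->
  Fx L k0 Nx phi gam rho i j <= rho i j * cxmax L k0 Nx Ny phi gam /\
  - FxL L k0 Nx phi gam rho i j <= rho i j * cxmax L k0 Nx Ny phi gam.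
Proof.
move=> hr hi hj; split.
  rewrite /Fx; case: ifP => h.
    have hi' : (i < Nx.-1)%N by move: h; case: (Nx).
    by have [] := key _ _ (vxf L k0 Nx phi i j + wxf L k0 Nx gam i j) _ _
      (hr i j hi hj) (hr _ _ h hj) (normvw _ _) (cx_le _ _ hi' hj).
  by apply: mulr_ge0 => //; [exact: hr | exact: cxmax_ge0].
rewrite /FxL; case: eqP => [_|/eqP h0].
  by rewrite oppr0; apply: mulr_ge0 => //; [exact: hr | exact: cxmax_ge0].
have hh : (i.-1.+1 < Nx)%N by rewrite prednK // lt0n.
rewrite /Fx hh.
have e : i.-1.+1 = i by rewrite prednK // lt0n.
have hi' : (i.-1 < Nx.-1)%N by move: hh; case: (Nx).
have := key _ _ (vxf L k0 Nx phi i.-1 j + wxf L k0 Nx gam i.-1 j) _ _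
  (hr i.-1 j (leq_ltn_trans (leq_pred i) hi) hj) (hr i j hi hj) (normvw _ _)
  (cx_le _ _ hi' hj).
by rewrite e => -[].
Qed.

Lemma Fy_le rho i j : nonneg Nx Ny rho -> (i < Nx)%N -> (j < Ny)%N ->
  Fy L k0 Ny phi gam rho i j <= rho i j * cymax L k0 Nx Ny phi gam /\
  - FyL L k0 Ny phi gam rho i j <= rho i j * cymax L k0 Nx Ny phi gam.
Proof.
move=> hr hi hj; split.
  rewrite /Fy; case: ifP => h.
    have hj' : (j < Ny.-1)%N by move: h; case: (Ny).
    by have [] := key _ _ (vyf L k0 Ny phi i j + wyf L k0 Ny gam i j) _ _
      (hr i j hi hj) (hr _ _ hi h) (normvw _ _) (cy_le _ _ hi hj').
  by apply: mulr_ge0 => //; [exact: hr | exact: cymax_ge0].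
rewrite /FyL; case: eqP => [_|/eqP h0].
  by rewrite oppr0; apply: mulr_ge0 => //; [exact: hr | exact: cymax_ge0].
have hh : (j.-1.+1 < Ny)%N by rewrite prednK // lt0n.
rewrite /Fy hh.
have e : j.-1.+1 = j by rewrite prednK // lt0n.
have hj' : (j.-1 < Ny.-1)%N by move: hh; case: (Ny).
have := key _ _ (vyf L k0 Ny phi i j.-1 + wyf L k0 Ny gam i j.-1) _ _
  (hr i j.-1 hi (leq_ltn_trans (leq_pred j) hj)) (hr i j hi hj) (normvw _ _)
  (cy_le _ _ hi hj').
by rewrite e => -[].
Qed.

Lemma euler_nonneg (dz : R) rho : 0 < L -> 0 < dz -> (0 < Nx)%N -> (0 < Ny)%N ->
  nonneg Nx Ny rho ->
  dz * (cxmax L k0 Nx Ny phi gam / dx L Nx + cymax L k0 Nx Ny phi gam / dy L Ny)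
    <= 1/2 ->
  nonneg Nx Ny (euler L k0 Nx Ny phi gam dz rho).
Proof.
move=> hL hdz hNx hNy hr hcfl i j hi hj.
have hdx : 0 < (dx L Nx)^-1 by rewrite invr_gt0 /dx divr_gt0 ?ltr0n // mulr_gt0.
have hdy : 0 < (dy L Ny)^-1 by rewrite invr_gt0 /dy divr_gt0 ?ltr0n // mulr_gt0.
have [f1 f2] := Fx_le _ _ _ hr hi hj.
have [g1 g2] := Fy_le _ _ _ hr hi hj.
have r0 := hr i j hi hj.
rewrite /euler /Rop.
set X := Fx _ _ _ _ _ _ _ _ in f1 *.
set XL := FxL _ _ _ _ _ _ _ _ in f2 *.
set Y := Fy _ _ _ _ _ _ _ _ in g1 *.
set YL := FyL _ _ _ _ _ _ _ _ in g2 *.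
set a := cxmax _ _ _ _ _ _ in f1 f2 hcfl *.
set b := cymax _ _ _ _ _ _ in g1 g2 hcfl *.
set p := (dx L Nx)^-1 in hdx hcfl *.
set q := (dy L Ny)^-1 in hdy hcfl *.
set r := rho i j in f1 f2 g1 g2 r0 *.
have h1 : (X - XL) * p <= 2 * r * a * p by apply: ler_wpM2r; lra.
have h2 : (Y - YL) * q <= 2 * r * b * q by apply: ler_wpM2r; lra.
have h3 : dz * ((X - XL) * p + (Y - YL) * q) <= dz * (2 * r * a * p + 2 * r * b * q).
  by apply: ler_wpM2l; lra.
have h4 : 2 * r * (dz * (a * p + b * q)) <= 2 * r * (1/2).
  by apply: ler_wpM2l => //; lra.
have e : dz * (2 * r * a * p + 2 * r * b * q) = 2 * r * (dz * (a * p + b * q)) by ring.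
rewrite e in h3.
lra.
Qed.

End P.

Theorem proposition4p3 (R : realFieldType) (L k0 dz : R) (Nx Ny : nat)
  (phi gam rho : grid R) :
  0 < L -> 0 < k0 -> 0 < dz -> (0 < Nx)%N -> (0 < Ny)%N ->
  nonneg Nx Ny rho ->
  dz * (cxmax L k0 Nx Ny phi gam / dx L Nx + cymax L k0 Nx Ny phi gam / dy L Ny)
    <= 1/2 ->
  nonneg Nx Ny (euler L k0 Nx Ny phi gam dz rho) /\
  nonneg Nx Ny (ssprk3 L k0 Nx Ny phi gam dz rho).
Proof.
move=> hL hk hdz hNx hNy hr hcfl.
have E := fun u => @euler_nonneg R L k0 Nx Ny phi gam dz u hL hdz hNx hNy.
have e1 := E rho hr hcfl.
split => //.
have e2 := E _ e1 hcfl.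
have hu2 : nonneg Nx Ny (fun i j => 3/4 * rho i j
   + 1/4 * euler L k0 Nx Ny phi gam dz (euler L k0 Nx Ny phi gam dz rho) i j).
  move=> i j hi hj; apply: addr_ge0; apply: mulr_ge0; [lra|exact: hr|lra|exact: e2].
have e3 := E _ hu2 hcfl.
move=> i j hi hj; rewrite /ssprk3; apply: addr_ge0; apply: mulr_ge0; [lra|exact: hr|lra|exact: e3].
Qed.
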